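(* Let $\tau$ be a topology on $\mathbb{R}$ such that $\tau_e\subset\tau$ and every nonempty $\tau$-open set has the Baire property and is non-meager (with respect to the Euclidean topology). For any function $f\colon\mathbb{R}\to\mathbb{R}$, if $\mathrm{C}_\tau(f)$ is dense in $\mathbb{R}$, then $\mathrm{C}_\tau(f)$ is residual.
   Context: $\tau_e$ is the Euclidean topology. $\mathrm{C}_\tau(f)$ is the set of points at which $f\colon(\mathbb{R},\tau)\to(\mathbb{R},\tau_e)$ is continuous. A set is residual if its complement is meager (in the Euclidean topology). *)

(* Defs.v *)
From Stdlib Require Import Reals.
Open Scope R_scope.

Definition eopen (U : R -> Prop) : Prop :=
  forall x, U x -> exists d, d > 0 /\ forall y, Rabs (y - x) < d -> U y.

Definition is_topology (T : (R -> Prop) -> Prop) : Prop :=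
  T (fun _ => True) /\ T (fun _ => False) /\
  (forall U V, T U -> T V -> T (fun x => U x /\ V x)) /\
  (forall F : (R -> Prop) -> Prop, (forall U, F U -> T U) ->
     T (fun x => exists U, F U /\ U x)).

Definition eclosure (A : R -> Prop) (x : R) : Prop :=
  forall d, d > 0 -> exists y, A y /\ Rabs (y - x) < d.

Definition nowhere_dense (A : R -> Prop) : Prop :=
  forall U, eopen U -> (forall x, U x -> eclosure A x) -> forall x, ~ U x.

Definition meager (A : R -> Prop) : Prop :=
  exists N : nat -> (R -> Prop), (forall n, nowhere_dense (N n)) /\
    forall x, A x -> exists n, N n x.

Definition baire_property (A : R -> Prop) : Prop :=
  exists U, eopen U /\ meager (fun x => (A x /\ ~ U x) \/ (U x /\ ~ A x)).

Definition residual (A : R -> Prop) : Prop := meager (fun x => ~ A x).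

Definition dense (A : R -> Prop) : Prop :=
  forall x eps, eps > 0 -> exists y, A y /\ Rabs (y - x) < eps.

Definition C_tau (T : (R -> Prop) -> Prop) (f : R -> R) (x : R) : Prop :=
  forall eps, eps > 0 -> exists U, T U /\ U x /\
    forall y, U y -> Rabs (f y - f x) < eps.

(* Main.v *)
Require Import Defs.
From Stdlib Require Import Reals Lra Lia.
From Stdlib Require Import ClassicalEpsilon Classical.
From Stdlib Require Cantor.
Open Scope R_scope.

Lemma meager_sub (A B : R -> Prop) : meager B -> (forall x, A x -> B x) -> meager A.
Proof.
  intros [N [HN HB]] HAB. exists N. split; auto.
Qed.

Lemma meager_add (A B : R -> Prop) : nowhere_dense A -> meager B ->
  meager (fun x => A x \/ B x).
Proof.
  intros HA [N [HN HB]].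
  exists (fun k => match k with O => A | S m => N m end). split.
  - intros [|m]; auto.
  - intros x [Hx|Hx]. exists O; auto. destruct (HB x Hx) as [m Hm]. exists (S m); auto.
Qed.

Lemma meager_countable (E : nat -> R -> Prop) : (forall n, meager (E n)) ->
  meager (fun x => exists n, E n x).
Proof.
  intros H.
  set (F := fun n => proj1_sig (constructive_indefinite_description _ (H n))).
  assert (HF : forall n, (forall m, nowhere_dense (F n m)) /\ forall x, E n x -> exists m, F n m x).
  { intro n. unfold F. destruct (constructive_indefinite_description _ (H n)) as [N HN]. exact HN. }
  exists (fun k => let p := Cantor.of_nat k in F (fst p) (snd p)). split.
  - intro k. apply HF.
  - intros x [n Hn]. destruct (proj2 (HF n) x Hn) as [m Hm].
    exists (Cantor.to_nat (n, m)). rewrite Cantor.cancel_of_to. simpl. exact Hm.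
Qed.

Theorem mainTheorem14 (T : (R -> Prop) -> Prop)
  (hT : is_topology T)
  (hfiner : forall U, eopen U -> T U)
  (hopen : forall U, T U -> (exists x, U x) -> baire_property U /\ ~ meager U)
  (f : R -> R) :
  dense (C_tau T f) -> residual (C_tau T f).
Proof.
  intros Hd. destruct hT as [_ [_ [Hint Hun]]].
  set (e := fun n : nat => / INR (S n)).
  assert (He : forall n, e n > 0).
  { intro n. unfold e. apply Rinv_0_lt_compat. apply lt_0_INR. lia. }
  set (Fam := fun n (W : R -> Prop) => T W /\ forall y z, W y -> W z -> Rabs (f y - f z) < e n).
  set (G := fun n x => exists W, Fam n W /\ W x).
  assert (HGT : forall n, T (G n)).
  { intro n. apply Hun. intros U [HU _]. exact HU. }
  assert (C1 : forall x, ~ C_tau T f x -> exists n, ~ G n x).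
  { intros x Hx. apply NNPP. intro Hn. apply Hx. intros eps Heps.
    destruct (archimed_cor1 eps Heps) as [N [HN HN0]].
    assert (Gx : G (pred N) x).
    { apply NNPP. intro H'. apply Hn. exists (pred N). exact H'. }
    destruct Gx as [W [[HW Hosc] HWx]]. exists W. split; [exact HW|split;[exact HWx|]].
    intros y Hy. specialize (Hosc y x Hy HWx).
    replace (e (pred N)) with (/ INR N) in Hosc. lra.
    unfold e. f_equal. f_equal. lia. }
  assert (C2 : forall n U, eopen U -> (exists x, U x) -> exists c, G n c /\ U c).
  { intros n U HU [x Hx]. destruct (HU x Hx) as [d [Hd0 Hdd]].
    destruct (Hd x d Hd0) as [c [Hc Hcx]].
    assert (Uc : U c) by (apply Hdd; exact Hcx).
    destruct (Hc (e n / 2)) as [V [HV [HVc HVf]]]. { specialize (He n). lra. }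
    exists c. split; [|exact Uc].
    exists (fun y => V y /\ U y). split; [|split; assumption].
    split. apply Hint; auto.
    intros y z [Hy _] [Hz _]. pose proof (HVf y Hy).
    replace (f y - f z) with ((f y - f c) - (f z - f c)) by ring.
    eapply Rle_lt_trans. apply Rabs_triang. rewrite Rabs_Ropp.
    pose proof (HVf z Hz). lra. }
  assert (C3 : forall n, meager (fun x => ~ G n x)).
  { intro n.
    assert (Hne : exists x, G n x).
    { destruct (C2 n (fun _ => True)) as [c [Hc _]].
      - intros x _. exists 1. split; [lra|auto].
      - exists 0; auto.
      - exists c; exact Hc. }
    destruct (hopen (G n) (HGT n) Hne) as [[O [HO HS]] _].
    apply meager_sub with (B := fun x => (~ O x) \/ ((G n x /\ ~ O x) \/ (O x /\ ~ G n x))).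
    2: { intros x Hx. destruct (classic (O x)); tauto. }
    apply meager_add; [|exact HS].
    intros U HU Hcl x Hx.
    destruct (C2 n U HU (ex_intro _ x Hx)) as [c [Gc Uc]].
    assert (HW : T (fun y => G n y /\ U y)) by (apply Hint; auto).
    destruct (hopen _ HW (ex_intro _ c (conj Gc Uc))) as [_ Hnm].
    apply Hnm. apply meager_sub with (1 := HS).
    intros y [Gy Uy]. left. split; [exact Gy|].
    intro Oy. destruct (HU y Uy) as [d1 [Hd1 H1]]. destruct (HO y Oy) as [d2 [Hd2 H2]].
    destruct (Hcl y Uy (Rmin d1 d2)) as [z [Hz Hzy]].
    { apply Rmin_pos; auto. }
    apply Hz. apply H2. pose proof (Rmin_r d1 d2). lra. }
  unfold residual. apply meager_sub with (B := fun x => exists n, ~ G n x).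
  - apply meager_countable. exact C3.
  - exact C1.
Qed.
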